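(* Let $n$ be a positive integer and let $A(n)=(a_{ij})$, $p=p(n)$, $pp=pp(n)$, $b(n)$ be as in the context. Let $m\ge 1$ be an integer such that $\overline{p}=pm$ satisfies $\lfloor \overline{p}/2\rfloor> b(n)$, put $r=\lfloor\overline{p}/2\rfloor$, let $v$ be an integer with $v\ge pp+\overline{p}$, and let $B=(b_{ij})_{1\le i,j\le\overline{p}}$ be the $\overline{p}\times\overline{p}$ matrix with $b_{ij}=a_{v+i,v+j}$ if $i-r\le j\le i+r$; $b_{ij}=a_{v+i,v+j-\overline{p}}$ if $j>i+r$; $b_{ij}=a_{v+i,v+j+\overline{p}}$ if $j<i-r$. Then every row of $B$ contains exactly $n+1$ ones.
   Context: $\mathbb{N}=\{1,2,3,\dots\}$. Fix a positive integer $n$. The infinite $\{0,1\}$-matrix $A(n)=(a_{ij})_{i,j\in\mathbb{N}}$ is defined recursively. Its entries are determined row by row (row $1$ first), and within each row from left to right, so that $a_{kl}$ is determined after all $a_{ij}$ with $i<k$ and all $a_{kj}$ with $j<l$. One sets $a_{kl}=1$ if and only if all of the following hold: (1) $\sum_{j<l}a_{kj}<n+1$; (2) $\sum_{i<k}a_{il}<n+1$; (3) there is no pair $(i,j)$ with $1\le i<k$, $1\le j<l$ and $a_{ij}=a_{il}=a_{kj}=1$. Otherwise $a_{kl}=0$. The matrix $A(n)$ is eventually periodic along the diagonal: there exist $c\ge0$, $q\ge1$ with $a_{i+q,j+q}=a_{ij}$ for all $i>c$, $j\ge1$. The period $p=p(n)$ is the smallest $q\ge1$ for which such a $c$ exists,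 and the preperiod $pp=pp(n)$ is the smallest $c\ge 0$ with $a_{i+p,j+p}=a_{ij}$ for all $i>c$, $j\ge 1$. Define $b(n)=\max\{|j-i| : i,j\ge1,\ a_{ij}=1,\ i>pp(n)\}$. *)

(* Defs.v *)
From mathcomp Require Import all_boot.
Set Implicit Arguments. Unset Strict Implicit. Unset Printing Implicit Defensive.

(* Indices are 1-based; entries at index 0 are never used (they evaluate to false). *)

(* decide n A k l s : value of a_{k l}, where A i j gives a_{ij} for all i < k,
   and s = [:: a_{k,1}; ...; a_{k,l-1}].  The three conjuncts are conditions
   (1) sum_{j<l} a_{kj} < n+1, (2) sum_{i<k} a_{il} < n+1, and (3) there is no
   (i,j) with 1 <= i < k, 1 <= j < l and a_{ij} = a_{il} = a_{kj} = 1. *)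
Definition decide (n : nat) (A : nat -> nat -> bool) (k l : nat) (s : seq bool) : bool :=
  [&& count id s < n.+1,
      count (fun i => A i l) (iota 1 k.-1) < n.+1 &
      ~~ has (fun i => has (fun j => [&& A i j, A i l & nth false s j.-1])
                           (iota 1 l.-1))
             (iota 1 k.-1)].

Fixpoint rowpref (n : nat) (A : nat -> nat -> bool) (k l : nat) : seq bool :=
  match l with
  | 0 => [::]
  | l'.+1 => let s := rowpref n A k l' in rcons s (decide n A k l s)
  end.

Definition lookup (T : seq (seq bool)) (i j : nat) : bool :=
  nth false (nth [::] T i.-1) j.-1.

(* the first k rows of A(n), each truncated to its first w entries;
   since a_{kl} only depends on entries a_{ij} with i <= k, j <= l,
   this is exactly the top-left k x w block of A(n) *)
Fixpoint tab (n w k : nat) : seq (seq bool) :=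
  match k with
  | 0 => [::]
  | k'.+1 => let P := tab n w k' in rcons P (rowpref n (lookup P) k'.+1 w)
  end.

Definition a (n i j : nat) : bool :=
  let N := maxn i j in lookup (tab n N N) i j.

Definition periodic_from (n q c : nat) : Prop :=
  forall i j, c < i -> 1 <= j -> a n (i + q) (j + q) = a n i j.

Definition is_period (n p : nat) : Prop :=
  [/\ 1 <= p, (exists c, periodic_from n p c)
    & forall q, 1 <= q -> (exists c, periodic_from n q c) -> p <= q].

Definition is_preperiod (n p pp : nat) : Prop :=
  periodic_from n p pp /\ forall c, periodic_from n p c -> pp <= c.

Definition absdiff (i j : nat) : nat := maxn i j - minn i j.

Definition is_bmax (n pp bn : nat) : Prop :=
  (exists i j, [/\ 1 <= i, 1 <= j, a n i j, pp < i & absdiff j i = bn]) /\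
  (forall i j, 1 <= i -> 1 <= j -> a n i j -> pp < i -> absdiff j i <= bn).

Definition Bmat (n pbar v i j : nat) : bool :=
  let r := pbar./2 in
  if (i <= j + r) && (j <= i + r) then a n (v + i) (v + j)
  else if i + r < j then a n (v + i) (v + j - pbar)
  else a n (v + i) (v + j + pbar).

(* Main.v *)
Require Import Defs.
From mathcomp Require Import all_boot.
From mathcomp Require Import zify.
Set Implicit Arguments. Unset Strict Implicit. Unset Printing Implicit Defensive.

Section S.
Variable n : nat.

Lemma decide_congr A A' k l s : 1 <= l ->
  (forall i j, 1 <= i < k -> 1 <= j <= l -> A i j = A' i j) ->
  decide n A k l s = decide n A' k l s.
Proof.
move=> Hl H; rewrite /decide.
have E1 : count (fun i => A i l) (iota 1 k.-1) = count (fun i => A' i l) (iota 1 k.-1).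
  apply: eq_in_count => i; rewrite mem_iota -subn1 => Hi; apply: H; lia.
have E2 : has (fun i => has (fun j => [&& A i j, A i l & nth false s j.-1]) (iota 1 l.-1)) (iota 1 k.-1)
  = has (fun i => has (fun j => [&& A' i j, A' i l & nth false s j.-1]) (iota 1 l.-1)) (iota 1 k.-1).
  apply: eq_in_has => x; rewrite mem_iota -subn1 => Hi.
  apply: eq_in_has => y; rewrite mem_iota -subn1 => Hj.
  rewrite !H //; lia.
by rewrite E1 E2.
Qed.

Lemma size_rowpref A k l : size (rowpref n A k l) = l.
Proof. by elim: l => //= l IH; rewrite size_rcons IH. Qed.

Lemma rowpref_nth A k l l' j : j < l -> l <= l' ->
  nth false (rowpref n A k l') j = nth false (rowpref n A k l) j.
Proof.
move=> Hj; elim: l' => [|l' IH] Hl; first by lia.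
case: (ltnP l' l) => Hl'.
- by have -> : l = l'.+1 by lia.
- rewrite /= nth_rcons size_rowpref (leq_trans Hj Hl') IH //.
Qed.

Lemma rowpref_congr A A' k l :
  (forall i j, 1 <= i < k -> 1 <= j <= l -> A i j = A' i j) ->
  rowpref n A k l = rowpref n A' k l.
Proof.
elim: l => //= l IH H.
rewrite IH; last by move=> i j Hi Hj; apply: H; lia.
by rewrite (@decide_congr A A' k l.+1 _ isT H).
Qed.

Lemma size_tab w k : size (tab n w k) = k.
Proof. by elim: k => //= k IH; rewrite size_rcons IH. Qed.

Lemma tab_nth w k k' i : i < k -> k <= k' ->
  nth [::] (tab n w k') i = nth [::] (tab n w k) i.
Proof.
move=> Hj; elim: k' => [|k' IH] Hl; first by lia.
case: (ltnP k' k) => Hl'.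
- by have -> : k = k'.+1 by lia.
- rewrite /= nth_rcons size_tab (leq_trans Hj Hl') IH //.
Qed.

Lemma lookup_tab_mono w k k' i j : 1 <= i <= k -> k <= k' ->
  lookup (tab n w k') i j = lookup (tab n w k) i j.
Proof. move=> Hi Hk; rewrite /lookup (@tab_nth w k k' i.-1) //; lia. Qed.

Lemma tab_row w k : nth [::] (tab n w k.+1) k = rowpref n (lookup (tab n w k)) k.+1 w.
Proof. by rewrite /= nth_rcons size_tab ltnn eqxx. Qed.

Lemma tab_stable k w w' i j : 1 <= i <= k -> 1 <= j -> j <= w -> j <= w' ->
  lookup (tab n w k) i j = lookup (tab n w' k) i j.
Proof.
elim: k i j => [|k IH] i j Hi Hj Hw Hw'; first by lia.
case: (ltnP i k.+1) => Hik.
- have -> : lookup (tab n w k.+1) i j = lookup (tab n w k) i j by apply: lookup_tab_mono; lia.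
  have -> : lookup (tab n w' k.+1) i j = lookup (tab n w' k) i j by apply: lookup_tab_mono; lia.
  apply: IH; lia.
have -> : i = k.+1 by lia.
rewrite /lookup /= -/(lookup _) -!tab_row.
rewrite !tab_row (@rowpref_nth _ _ j w) ?(@rowpref_nth _ _ j w') ; try lia.
congr (nth false _ _); apply: rowpref_congr => i' j' Hi' Hj'; apply: IH; lia.
Qed.

Lemma a_tab w k i j : 1 <= i <= k -> 1 <= j <= w -> a n i j = lookup (tab n w k) i j.
Proof.
move=> Hi Hj; rewrite /a.
have -> : lookup (tab n (maxn i j) (maxn i j)) i j = lookup (tab n (maxn i j) (maxn (maxn i j) k)) i j.
  symmetry; apply: lookup_tab_mono; lia.
rewrite (@tab_stable _ (maxn i j) w); try lia.
apply: lookup_tab_mono; lia.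
Qed.

Lemma a_rec k l : 1 <= k -> 1 <= l ->
  a n k l = decide n (a n) k l (map (a n k) (iota 1 l.-1)).
Proof.
case: k => // k _; case: l => // l _.
rewrite (@a_tab l.+1 k.+1 k.+1 l.+1); try lia.
rewrite /lookup tab_row /= nth_rcons size_rowpref ltnn eqxx.
have Hs : rowpref n (lookup (tab n l.+1 k)) k.+1 l = map (a n k.+1) (iota 1 l).
  apply: (@eq_from_nth _ false); first by rewrite size_rowpref size_map size_iota.
  move=> j; rewrite size_rowpref => Hj.
  rewrite (nth_map 0) ?size_iota // nth_iota // (@a_tab l.+1 k.+1 k.+1 (1+j)); try lia.
  rewrite /lookup tab_row add1n /= (@rowpref_nth _ _ l l.+1 j) //; lia.
rewrite Hs; apply: decide_congr => // i j Hi Hj.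
rewrite (@a_tab l.+1 k i j) //; lia.
Qed.
End S.

Section S2.
Variable n : nat.

Lemma count_iotaS k l :
  count (a n k) (iota 1 l.+1) = count (a n k) (iota 1 l) + a n k l.+1.
Proof. by rewrite -(addn1 l) iotaD count_cat /= add1n addn0 addn1. Qed.

Lemma count_le k l : 1 <= k -> count (a n k) (iota 1 l) <= n.+1.
Proof.
move=> Hk; elim: l => [|l IH] //; rewrite count_iotaS.
case E: (a n k l.+1); last by rewrite addn0.
have Hc : count (a n k) (iota 1 l) < n.+1.
  move: E; rewrite a_rec // /decide count_map => /andP[H _]; exact: H.
rewrite addn1; exact: Hc.
Qed.

Lemma a_one k M l : 1 <= k -> 1 <= M ->
  (forall i l', 1 <= i < k -> M <= l' -> a n i l' = false) ->
  M <= l -> count (a n k) (iota 1 l) < n.+1 -> a n k l.+1.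
Proof.
move=> Hk HM H Hl Hc; rewrite a_rec //= /decide count_map.
apply/and3P; split; first exact: Hc.
- rewrite (@eq_in_count _ _ pred0) ?count_pred0 // => i; rewrite mem_iota -subn1 => Hi.
  apply: H; lia.
- apply/hasPn => i; rewrite mem_iota -subn1 => Hi; apply/hasPn => j _.
  by rewrite (H i l.+1) ?andbF //; lia.
Qed.

Lemma count_grow k M : 1 <= k -> 1 <= M ->
  (forall i l', 1 <= i < k -> M <= l' -> a n i l' = false) ->
  forall t, minn n.+1 t <= count (a n k) (iota 1 (M + t)).
Proof.
move=> Hk HM H; elim=> [|t IH]; first by rewrite minn0.
rewrite addnS count_iotaS.
case: (ltnP (count (a n k) (iota 1 (M + t))) n.+1) => Hc.
- rewrite (a_one Hk HM H) //; [lia | lia].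
- lia.
Qed.

Lemma fin_supp k : exists M, 1 <= M /\
  forall i l, 1 <= i <= k -> M <= l -> a n i l = false.
Proof.
elim: k => [|k [M [HM IH]]]; first by exists 1; split => // i l; lia.
exists (M + n.+2); split; first lia.
move=> i l Hi Hl.
case: (ltnP i k.+1) => Hik; first by apply: IH; lia.
have -> : i = k.+1 by lia.
have H' : forall i l', 1 <= i < k.+1 -> M <= l' -> a n i l' = false.
  move=> i' l' Hi' Hl'; apply: IH; lia.
have G := count_grow (isT : 1 <= k.+1) HM H' (l.-1 - M).
apply/negbTE; apply/negP; rewrite a_rec //; last lia.
rewrite /decide count_map => /andP[Hc _].
have E : M + (l.-1 - M) = l.-1 by rewrite -subn1; lia.
rewrite E in G.
have Hc' : count (a n k.+1) (iota 1 l.-1) < n.+1 := Hc.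
move: G Hc'; rewrite -!subn1; lia.
Qed.

Lemma count_row k : 1 <= k -> exists M, forall L, M <= L ->
  count (a n k) (iota 1 L) = n.+1.
Proof.
move=> Hk; have [M [HM H]] := fin_supp k.-1.
have H' : forall i l', 1 <= i < k -> M <= l' -> a n i l' = false.
  move=> i l' Hi Hl; apply: H; rewrite -?subn1; lia.
exists (M + n.+1) => L HL.
have G := count_grow Hk HM H' (L - M).
have E : M + (L - M) = L by lia.
rewrite E in G.
have := count_le L Hk; lia.
Qed.
End S2.

Lemma sum_count (P : pred nat) s : \sum_(j <- s) (P j : nat) = count P s.
Proof. by elim: s => [|x s IH]; rewrite ?big_nil ?big_cons ?IH. Qed.

Lemma count_uniq_eq (P : pred nat) s1 s2 : uniq s1 -> uniq s2 ->
  (forall x, P x -> (x \in s1) = (x \in s2)) -> count P s1 = count P s2.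
Proof.
move=> U1 U2 H; rewrite -!size_filter; apply: perm_size.
apply: uniq_perm; rewrite ?filter_uniq // => x; rewrite !mem_filter.
by case Px: (P x) => //=; apply: H.
Qed.

Theorem theorem4p1 (n p pp bn m v : nat) :
  0 < n ->
  is_period n p ->
  is_preperiod n p pp ->
  is_bmax n pp bn ->
  1 <= m ->
  bn < (p * m)./2 ->
  pp + p * m <= v ->
  forall i, 1 <= i <= p * m ->
    \sum_(1 <= j < (p * m).+1) (Bmat n (p * m) v i j : nat) = n.+1.
Proof.
move=> Hn Hper Hpre [_ Hb] Hm Hbr Hv i Hi.
rewrite /Bmat.
set pb := p * m in Hbr Hv Hi *.
set r := pb./2 in Hbr *.
have Hr2 : r + r <= pb.
  have Hr : pb = odd pb + r.*2 by rewrite odd_double_half.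
  rewrite -addnn in Hr; move: Hr; case: (odd pb) => /= Hr; lia.
set f := fun j => if (i <= j + r) && (j <= i + r) then v + j
                  else if i + r < j then v + j - pb else v + j + pb.
have fc : forall j, (i <= j + r /\ j <= i + r /\ f j = v + j) \/
                    (i + r < j /\ f j = v + j - pb) \/ (j + r < i /\ f j = v + j + pb).
  move=> j; rewrite /f; case: (leqP i (j + r)) => H1; case: (leqP j (i + r)) => H2 /=; lia.
have -> : \sum_(1 <= j < pb.+1)
    ((if (i <= j + r) && (j <= i + r) then a n (v + i) (v + j)
      else if i + r < j then a n (v + i) (v + j - pb) else a n (v + i) (v + j + pb)) : nat)
  = count (a n (v + i)) (map f (iota 1 pb)).
  have -> : index_iota 1 pb.+1 = iota 1 pb by rewrite /index_iota subSS subn0.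
  rewrite (sum_count (fun j => if (i <= j + r) && (j <= i + r) then a n (v + i) (v + j)
      else if i + r < j then a n (v + i) (v + j - pb) else a n (v + i) (v + j + pb))).
  rewrite count_map; apply: eq_count => j /=; rewrite /preim /f /=.
  by case: ifP => //; case: ifP.
have Hk : 1 <= v + i by lia.
have Hk2 : pp < v + i by lia.
have [M HM] := count_row n Hk.
rewrite -(HM (maxn M (v + i + bn))); last lia.
apply: count_uniq_eq; rewrite ?iota_uniq //.
- rewrite map_inj_in_uniq ?iota_uniq // => j1 j2; rewrite !mem_iota => H1 H2 E.
  have := fc j1; have := fc j2; lia.
- move=> x Ha; rewrite mem_iota.
  case: (posnP x) => Hx.
  + subst x; rewrite /=; apply/mapP => [[j]]; rewrite mem_iota => Hj Ej.
    have := fc j; lia.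
  + have := Hb (v + i) x Hk Hx Ha Hk2.
    rewrite /absdiff => Hd; have Hd' : x <= v + i + bn /\ v + i <= x + bn by lia.
    have -> : (x < 1 + maxn M (v + i + bn)) = true by apply/idP; lia.
    rewrite /=.
    apply/mapP.
    case: (leqP x v) => Hx1.
    * exists (x + pb - v); first by rewrite mem_iota; lia.
      have := fc (x + pb - v); lia.
    case: (leqP x (v + pb)) => Hx2.
    * exists (x - v); first by rewrite mem_iota; lia.
      have := fc (x - v); lia.
    * exists (x - v - pb); first by rewrite mem_iota; lia.
      have := fc (x - v - pb); lia.
Qed.
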